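(* Let $T^2=\mathbb R^2/\mathbb Z^2$ and let $f\colon T^2\to T^2$ be $f([x])=[Ax]$ with $A=\begin{pmatrix}2&1\\1&1\end{pmatrix}$. Let $K\subseteq T^2$ be the orbit of a periodic point of $f$. Then $K$ is dynamically isolated for $f$, and the restriction of $f$ to $T^2\setminus K$ is metric-independent expansive.
   Context: A set $K$ invariant under a homeomorphism $f$ is dynamically isolated if there exists an open set $U\supseteq K$ with $\bigcap_{n\in\mathbb Z}f^n(U)=K$. A homeomorphism of a metrizable space is metric-independent expansive if for every compatible metric $\rho$ there is $c>0$ such that for all $x\neq y$ there exists $n\in\mathbb Z$ with $\rho(f^n(x),f^n(y))>c$. *)

(* Defs.v *)
From Stdlib Require Import Reals Lra ZArith.
Open Scope R_scope.

(** The 2-torus T^2 = R^2/Z^2, represented by the canonical representatives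
    in the fundamental domain [0,1)^2. *)
Definition T2 : Type :=
  {p : R * R | (0 <= fst p < 1) /\ (0 <= snd p < 1)}.

Definition pt (x : T2) : R * R := proj1_sig x.

Lemma frac_part_bounds (r : R) : 0 <= frac_part r < 1.
Proof.
  unfold frac_part. destruct (base_Int_part r) as [H1 H2]. lra.
Qed.

Definition proj (p : R * R) : T2 :=
  exist _ (frac_part (fst p), frac_part (snd p))
    (conj (frac_part_bounds (fst p)) (frac_part_bounds (snd p))).

Definition catA (p : R * R) : R * R :=
  (2 * fst p + snd p, fst p + snd p).
Definition catAinv (p : R * R) : R * R :=
  (fst p - snd p, - fst p + 2 * snd p).

Definition cat (x : T2) : T2 := proj (catA (pt x)).
Definition cat_inv (x : T2) : T2 := proj (catAinv (pt x)).

Definition cat_iter (n : Z) (x : T2) : T2 :=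
  match n with
  | Z0 => x
  | Zpos k => Nat.iter (Pos.to_nat k) cat x
  | Zneg k => Nat.iter (Pos.to_nat k) cat_inv x
  end.

Definition openR2 (U : R * R -> Prop) : Prop :=
  forall p, U p -> exists e, 0 < e /\
    forall q, Rabs (fst q - fst p) < e -> Rabs (snd q - snd p) < e -> U q.

Definition openT2 (U : T2 -> Prop) : Prop := openR2 (fun p => U (proj p)).

Definition periodic_point (x : T2) : Prop :=
  exists n : nat, (0 < n)%nat /\ Nat.iter n cat x = x.

Definition orbit (x : T2) : T2 -> Prop :=
  fun y => exists n : Z, y = cat_iter n x.

Definition image_iter (n : Z) (U : T2 -> Prop) : T2 -> Prop :=
  fun y => exists z, U z /\ y = cat_iter n z.

Definition dyn_isolated (K : T2 -> Prop) : Prop :=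
  exists U : T2 -> Prop, openT2 U /\ (forall y, K y -> U y) /\
    (forall y, (forall n : Z, image_iter n U y) <-> K y).

(** rho is a metric on the subspace X of T^2 (only its values on X matter). *)
Definition metric_on (X : T2 -> Prop) (rho : T2 -> T2 -> R) : Prop :=
  (forall x y, X x -> X y -> 0 <= rho x y) /\
  (forall x y, X x -> X y -> (rho x y = 0 <-> x = y)) /\
  (forall x y, X x -> X y -> rho x y = rho y x) /\
  (forall x y z, X x -> X y -> X z -> rho x z <= rho x y + rho y z).

Definition compatible_metric (X : T2 -> Prop) (rho : T2 -> T2 -> R) : Prop :=
  metric_on X rho /\
  forall V : T2 -> Prop, (forall x, V x -> X x) ->
    ((exists U, openT2 U /\ forall x, X x -> (V x <-> U x)) <->
     (forall x, V x -> exists e, 0 < e /\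
        forall y, X y -> rho x y < e -> V y)).

Definition mi_expansive_on (X : T2 -> Prop) : Prop :=
  forall rho, compatible_metric X rho ->
    exists c, 0 < c /\
      forall x y, X x -> X y -> x <> y ->
        exists n : Z, rho (cat_iter n x) (cat_iter n y) > c.

(* Main.v *)
Require Import Defs.
From Stdlib Require Import Reals Lra Lia ZArith List Classical ProofIrrelevance ClassicalEpsilon.
Open Scope R_scope.

Lemma abs_lt t e : Rabs t < e <-> -e < t < e.
Proof. unfold Rabs; destruct (Rcase_abs t); split; intros; lra. Qed.
Lemma abs_le t e : Rabs t <= e <-> -e <= t <= e.
Proof. unfold Rabs; destruct (Rcase_abs t); split; intros; lra. Qed.

Lemma pt_bounds (x : T2) : (0 <= fst (pt x) < 1) /\ (0 <= snd (pt x) < 1).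
Proof. exact (proj2_sig x). Qed.

Lemma eq_T2 (x y : T2) : pt x = pt y -> x = y.
Proof.
  destruct x as [p Hp], y as [q Hq]; unfold pt; simpl; intros ->.
  f_equal; apply proof_irrelevance.
Qed.

Lemma int_small (k : Z) : -1 < IZR k < 1 -> k = 0%Z.
Proof.
  intros [H1 H2]. apply lt_IZR in H1. apply lt_IZR in H2. lia.
Qed.

Lemma eq_mod (x y : T2) :
  (exists k1 : Z, fst (pt x) - fst (pt y) = IZR k1) ->
  (exists k2 : Z, snd (pt x) - snd (pt y) = IZR k2) -> x = y.
Proof.
  intros [k1 H1] [k2 H2].
  destruct (pt_bounds x) as [[a1 a2] [a3 a4]].
  destruct (pt_bounds y) as [[b1 b2] [b3 b4]].
  assert (k1 = 0%Z) by (apply int_small; lra).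
  assert (k2 = 0%Z) by (apply int_small; lra). subst.
  apply eq_T2. destruct (pt x) as [u v], (pt y) as [u' v']; simpl in *.
  f_equal; lra.
Qed.

Lemma pt_proj (p : R * R) : exists k1 k2 : Z,
  fst (pt (proj p)) = fst p - IZR k1 /\ snd (pt (proj p)) = snd p - IZR k2.
Proof.
  exists (Int_part (fst p)), (Int_part (snd p)). unfold proj, pt; simpl.
  unfold frac_part; split; reflexivity.
Qed.

Lemma proj_pt (x : T2) : proj (pt x) = x.
Proof.
  destruct (pt_proj (pt x)) as [k1 [k2 [H1 H2]]].
  apply eq_mod; [exists (-k1)%Z | exists (-k2)%Z]; rewrite ?H1, ?H2, opp_IZR; lra.
Qed.

Ltac zR := repeat (rewrite ?plus_IZR, ?minus_IZR, ?mult_IZR, ?opp_IZR).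

Lemma cat_cat_inv (x : T2) : cat (cat_inv x) = x.
Proof.
  unfold cat, cat_inv.
  destruct (pt_proj (catAinv (pt x))) as [k1 [k2 [H1 H2]]].
  destruct (pt_proj (catA (pt (proj (catAinv (pt x)))))) as [j1 [j2 [G1 G2]]].
  apply eq_mod.
  - exists (- (2*k1 + k2 + j1))%Z. rewrite G1. unfold catA, catAinv in *; cbn [fst snd] in H1, H2, G1, G2 |- *.
    rewrite H1, H2. zR. lra.
  - exists (- (k1 + k2 + j2))%Z. rewrite G2. unfold catA, catAinv in *; cbn [fst snd] in H1, H2, G1, G2 |- *.
    rewrite H1, H2. zR. lra.
Qed.

Lemma cat_inv_cat (x : T2) : cat_inv (cat x) = x.
Proof.
  unfold cat, cat_inv.
  destruct (pt_proj (catA (pt x))) as [k1 [k2 [H1 H2]]].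
  destruct (pt_proj (catAinv (pt (proj (catA (pt x)))))) as [j1 [j2 [G1 G2]]].
  apply eq_mod.
  - exists (- (k1 - k2 + j1))%Z. rewrite G1. unfold catA, catAinv in *; cbn [fst snd] in H1, H2, G1, G2 |- *.
    rewrite H1, H2. zR. lra.
  - exists (- (- k1 + 2 * k2 + j2))%Z. rewrite G2. unfold catA, catAinv in *; cbn [fst snd] in H1, H2, G1, G2 |- *.
    rewrite H1, H2. zR. lra.
Qed.
Definition d1 (a b : R) : R := Rmin (Rabs (a - b)) (1 - Rabs (a - b)).
Definition dT (x y : T2) : R :=
  Rmax (d1 (fst (pt x)) (fst (pt y))) (d1 (snd (pt x)) (snd (pt y))).

Lemma d1_le a b (k : Z) : 0 <= a < 1 -> 0 <= b < 1 -> d1 a b <= Rabs (a - b - IZR k).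
Proof.
  intros Ha Hb. unfold d1.
  destruct (Z.eq_dec k 0) as [->|Hk].
  - replace (a - b - IZR 0) with (a - b) by (simpl; ring). apply Rmin_l.
  - eapply Rle_trans; [apply Rmin_r|].
    destruct (Z_lt_le_dec k 0) as [Hl|Hl].
    + assert (IZR k <= -1) by (apply IZR_le; lia).
      unfold Rabs; destruct (Rcase_abs (a-b)); destruct (Rcase_abs (a-b-IZR k)); lra.
    + assert (1 <= IZR k) by (apply IZR_le; lia).
      unfold Rabs; destruct (Rcase_abs (a-b)); destruct (Rcase_abs (a-b-IZR k)); lra.
Qed.

Lemma d1_attain a b : 0 <= a < 1 -> 0 <= b < 1 -> exists k : Z, d1 a b = Rabs (a - b - IZR k).
Proof.
  intros Ha Hb. unfold d1, Rmin.
  destruct (Rle_dec (Rabs (a - b)) (1 - Rabs (a - b))).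
  - exists 0%Z. f_equal. simpl. ring.
  - destruct (Rle_dec 0 (a - b)).
    + exists 1%Z. rewrite Rabs_right in * by lra. rewrite Rabs_left by (simpl; lra). simpl. lra.
    + exists (-1)%Z. rewrite Rabs_left in * by lra. rewrite Rabs_right by (simpl; lra). simpl. lra.
Qed.

Lemma dT_le x y (k1 k2 : Z) :
  dT x y <= Rmax (Rabs (fst (pt x) - fst (pt y) - IZR k1)) (Rabs (snd (pt x) - snd (pt y) - IZR k2)).
Proof.
  destruct (pt_bounds x) as [Hx1 Hx2]. destruct (pt_bounds y) as [Hy1 Hy2].
  unfold dT. apply Rmax_lub.
  - eapply Rle_trans; [apply (d1_le _ _ k1); auto | apply Rmax_l].
  - eapply Rle_trans; [apply (d1_le _ _ k2); auto | apply Rmax_r].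
Qed.

Lemma dT_attain x y : exists k1 k2 : Z,
  dT x y = Rmax (Rabs (fst (pt x) - fst (pt y) - IZR k1)) (Rabs (snd (pt x) - snd (pt y) - IZR k2)).
Proof.
  destruct (pt_bounds x) as [Hx1 Hx2]. destruct (pt_bounds y) as [Hy1 Hy2].
  destruct (d1_attain _ _ Hx1 Hy1) as [k1 E1].
  destruct (d1_attain _ _ Hx2 Hy2) as [k2 E2].
  exists k1, k2. unfold dT. rewrite E1, E2. reflexivity.
Qed.

Lemma Rmax_lt a b c : a < c -> b < c -> Rmax a b < c.
Proof. intros; unfold Rmax; destruct Rle_dec; lra. Qed.
Lemma Rmax_lt_inv a b c : Rmax a b < c -> a < c /\ b < c.
Proof. intros; unfold Rmax in *; destruct Rle_dec; lra. Qed.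
Lemma Rmax_le_inv a b c : Rmax a b <= c -> a <= c /\ b <= c.
Proof. intros; unfold Rmax in *; destruct Rle_dec; lra. Qed.

Lemma dT_nonneg x y : 0 <= dT x y.
Proof.
  destruct (dT_attain x y) as [k1 [k2 ->]].
  eapply Rle_trans; [apply Rabs_pos | apply Rmax_l].
Qed.

Lemma dT_refl x : dT x x = 0.
Proof.
  apply Rle_antisym; [|apply dT_nonneg].
  eapply Rle_trans; [apply (dT_le x x 0 0)|].
  simpl. rewrite !Rminus_0_r, !Rminus_diag, Rabs_R0. unfold Rmax; destruct Rle_dec; lra.
Qed.

Lemma dT_sym x y : dT x y = dT y x.
Proof.
  apply Rle_antisym.
  - destruct (dT_attain y x) as [k1 [k2 E]]. rewrite E.
    eapply Rle_trans; [apply (dT_le x y (-k1) (-k2))|].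
    rewrite !opp_IZR. rewrite <- (Rabs_Ropp (fst (pt x) - _ - _)), <- (Rabs_Ropp (snd (pt x) - _ - _)).
    right; f_equal; f_equal; ring.
  - destruct (dT_attain x y) as [k1 [k2 E]]. rewrite E.
    eapply Rle_trans; [apply (dT_le y x (-k1) (-k2))|].
    rewrite !opp_IZR. rewrite <- (Rabs_Ropp (fst (pt y) - _ - _)), <- (Rabs_Ropp (snd (pt y) - _ - _)).
    right; f_equal; f_equal; ring.
Qed.

Lemma dT_tri x y z : dT x z <= dT x y + dT y z.
Proof.
  destruct (dT_attain x y) as [k1 [k2 E]]. destruct (dT_attain y z) as [j1 [j2 F]].
  rewrite E, F. eapply Rle_trans; [apply (dT_le x z (k1 + j1) (k2 + j2))|].
  rewrite !plus_IZR. apply Rmax_lub.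
  - eapply Rle_trans; [|apply Rplus_le_compat; apply Rmax_l].
    eapply Rle_trans; [|apply Rabs_triang]. right; f_equal; ring.
  - eapply Rle_trans; [|apply Rplus_le_compat; apply Rmax_r].
    eapply Rle_trans; [|apply Rabs_triang]. right; f_equal; ring.
Qed.

Lemma dT_zero x y : dT x y = 0 -> x = y.
Proof.
  intro H. destruct (dT_attain x y) as [k1 [k2 E]]. rewrite H in E.
  assert (A1 : Rabs (fst (pt x) - fst (pt y) - IZR k1) <= 0) by (rewrite E; apply Rmax_l).
  assert (A2 : Rabs (snd (pt x) - snd (pt y) - IZR k2) <= 0) by (rewrite E; apply Rmax_r).
  apply abs_le in A1. apply abs_le in A2.
  apply eq_mod; [exists k1 | exists k2]; lra.
Qed.

Lemma dT_projk p q (k1 k2 : Z) : dT (proj p) (proj q) <=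
  Rmax (Rabs (fst p - fst q - IZR k1)) (Rabs (snd p - snd q - IZR k2)).
Proof.
  destruct (pt_proj p) as [a1 [a2 [A1 A2]]]. destruct (pt_proj q) as [b1 [b2 [B1 B2]]].
  eapply Rle_trans; [apply (dT_le _ _ (k1 + b1 - a1) (k2 + b2 - a2))|].
  rewrite A1, A2, B1, B2, !minus_IZR, !plus_IZR. right; f_equal; f_equal; ring.
Qed.

Lemma dT_proj p q : dT (proj p) (proj q) <= Rmax (Rabs (fst p - fst q)) (Rabs (snd p - snd q)).
Proof.
  eapply Rle_trans; [apply (dT_projk p q 0 0)|]. simpl. rewrite !Rminus_0_r. lra.
Qed.

Lemma dT_close (x : T2) (q : R * R) :
  dT (proj q) x <= Rmax (Rabs (fst q - fst (pt x))) (Rabs (snd q - snd (pt x))).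
Proof. rewrite <- (proj_pt x) at 1. apply dT_proj. Qed.

Lemma dT_cat x y : dT (cat x) (cat y) <= 3 * dT x y.
Proof.
  destruct (dT_attain x y) as [k1 [k2 E]]. rewrite E. unfold cat.
  eapply Rle_trans; [apply (dT_projk _ _ (2*k1+k2) (k1+k2))|].
  assert (Hu := Rmax_l (Rabs (fst (pt x) - fst (pt y) - IZR k1)) (Rabs (snd (pt x) - snd (pt y) - IZR k2))).
  assert (Hw := Rmax_r (Rabs (fst (pt x) - fst (pt y) - IZR k1)) (Rabs (snd (pt x) - snd (pt y) - IZR k2))).
  set (D := Rmax _ _) in *.
  apply abs_le in Hu. apply abs_le in Hw. unfold catA; cbn [fst snd]. zR.
  apply Rmax_lub; apply abs_le; lra.
Qed.

Lemma dT_cat_inv x y : dT (cat_inv x) (cat_inv y) <= 3 * dT x y.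
Proof.
  destruct (dT_attain x y) as [k1 [k2 E]]. rewrite E. unfold cat_inv.
  eapply Rle_trans; [apply (dT_projk _ _ (k1-k2) (-k1+2*k2))|].
  assert (Hu := Rmax_l (Rabs (fst (pt x) - fst (pt y) - IZR k1)) (Rabs (snd (pt x) - snd (pt y) - IZR k2))).
  assert (Hw := Rmax_r (Rabs (fst (pt x) - fst (pt y) - IZR k1)) (Rabs (snd (pt x) - snd (pt y) - IZR k2))).
  set (D := Rmax _ _) in *.
  apply abs_le in Hu. apply abs_le in Hw. unfold catAinv; cbn [fst snd]. zR.
  apply Rmax_lub; apply abs_le; lra.
Qed.
Lemma cat_iter_form n x : cat_iter n x =
  if (0 <=? n)%Z then Nat.iter (Z.to_nat n) cat x else Nat.iter (Z.to_nat (- n)) cat_inv x.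
Proof. destruct n; reflexivity. Qed.

Lemma cat_iter_succ n x : cat_iter (n + 1) x = cat (cat_iter n x).
Proof.
  rewrite !cat_iter_form.
  destruct (Z_lt_le_dec n 0) as [H|H].
  - destruct (Z.eq_dec n (-1)) as [->|Hn].
    + simpl. symmetry; apply cat_cat_inv.
    + replace (0 <=? n + 1)%Z with false by (symmetry; apply Z.leb_gt; lia).
      replace (0 <=? n)%Z with false by (symmetry; apply Z.leb_gt; lia).
      replace (Z.to_nat (- n)) with (S (Z.to_nat (- (n + 1)))) by lia.
      simpl. symmetry; apply cat_cat_inv.
  - replace (0 <=? n + 1)%Z with true by (symmetry; apply Z.leb_le; lia).
    replace (0 <=? n)%Z with true by (symmetry; apply Z.leb_le; lia).
    replace (Z.to_nat (n + 1)) with (S (Z.to_nat n)) by lia. reflexivity.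
Qed.

Lemma cat_iter_pred n x : cat_iter (n - 1) x = cat_inv (cat_iter n x).
Proof.
  replace n with (n - 1 + 1)%Z at 2 by ring. rewrite cat_iter_succ.
  symmetry; apply cat_inv_cat.
Qed.

Lemma cat_iter_add m n x : cat_iter (n + m) x = cat_iter m (cat_iter n x).
Proof.
  revert n. induction m using Z.peano_ind; intro n.
  - rewrite Z.add_0_r. reflexivity.
  - rewrite <- Z.add_1_r, Z.add_assoc, !cat_iter_succ, IHm. reflexivity.
  - rewrite <- Z.sub_1_r. replace (n + (m - 1))%Z with (n + m - 1)%Z by ring.
    rewrite !cat_iter_pred, IHm. reflexivity.
Qed.

Lemma cat_iter_nat m x : cat_iter (Z.of_nat m) x = Nat.iter m cat x.
Proof.
  induction m. reflexivity.
  rewrite Nat2Z.inj_succ, <- Z.add_1_r, cat_iter_succ, IHm. reflexivity.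
Qed.

Lemma cat_iter_negnat m x : cat_iter (- Z.of_nat m) x = Nat.iter m cat_inv x.
Proof.
  induction m. reflexivity.
  rewrite Nat2Z.inj_succ. replace (- Z.succ (Z.of_nat m))%Z with (- Z.of_nat m - 1)%Z by lia.
  rewrite cat_iter_pred, IHm. reflexivity.
Qed.

Lemma cat_iter_inv n x : cat_iter (- n) (cat_iter n x) = x.
Proof. rewrite <- cat_iter_add. rewrite Z.add_opp_diag_r. reflexivity. Qed.
Lemma cat_iter_inv' n x : cat_iter n (cat_iter (- n) x) = x.
Proof. rewrite <- cat_iter_add. rewrite Z.add_opp_diag_l. reflexivity. Qed.

Lemma iter_cat_add m n x : Nat.iter m cat (cat_iter n x) = cat_iter (n + Z.of_nat m) x.
Proof. rewrite cat_iter_add, cat_iter_nat. reflexivity. Qed.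
Lemma iter_catinv_add m n x : Nat.iter m cat_inv (cat_iter n x) = cat_iter (n - Z.of_nat m) x.
Proof. rewrite <- Z.add_opp_r, cat_iter_add, cat_iter_negnat. reflexivity. Qed.
Definition sup (v : R * R) : R := Rmax (Rabs (fst v)) (Rabs (snd v)).

Lemma track_lin (F : T2 -> T2) (FA : R * R -> R * R)
  (HF : forall z, exists a1 a2 : Z, fst (pt (F z)) = fst (FA (pt z)) - IZR a1 /\
                                    snd (pt (F z)) = snd (FA (pt z)) - IZR a2)
  (HFA : forall p q (k1 k2 : Z), exists l1 l2 : Z,
      fst (FA p) - fst (FA q) - IZR l1 = fst (FA (fst p - fst q - IZR k1, snd p - snd q - IZR k2)) /\
      snd (FA p) - snd (FA q) - IZR l2 = snd (FA (fst p - fst q - IZR k1, snd p - snd q - IZR k2)))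
  (HN : forall v, sup (FA v) <= 3 * sup v)
  x y v0 (k1 k2 : Z)
  (H01 : fst (pt x) - fst (pt y) - IZR k1 = fst v0)
  (H02 : snd (pt x) - snd (pt y) - IZR k2 = snd v0)
  (Hv0 : sup v0 < 1/8)
  (Hall : forall m, dT (Nat.iter m F x) (Nat.iter m F y) < 1/8) :
  forall m, sup (Nat.iter m FA v0) < 1/8 /\ exists j1 j2 : Z,
    fst (pt (Nat.iter m F x)) - fst (pt (Nat.iter m F y)) - IZR j1 = fst (Nat.iter m FA v0) /\
    snd (pt (Nat.iter m F x)) - snd (pt (Nat.iter m F y)) - IZR j2 = snd (Nat.iter m FA v0).
Proof.
  induction m as [|m [Hs [j1 [j2 [E1 E2]]]]].
  - split; [exact Hv0|]. exists k1, k2. simpl. auto.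
  - simpl Nat.iter.
    set (X := Nat.iter m F x) in *. set (Y := Nat.iter m F y) in *.
    set (w := Nat.iter m FA v0) in *.
    destruct (HF X) as [a1 [a2 [A1 A2]]]. destruct (HF Y) as [b1 [b2 [B1 B2]]].
    destruct (HFA (pt X) (pt Y) j1 j2) as [l1 [l2 [L1 L2]]].
    assert (Ew : (fst (pt X) - fst (pt Y) - IZR j1, snd (pt X) - snd (pt Y) - IZR j2) = w).
    { destruct w; simpl in *; f_equal; lra. }
    rewrite Ew in L1, L2.
    destruct (dT_attain (F X) (F Y)) as [m1 [m2 EM]].
    assert (HM := Hall (S m)). simpl in HM. fold X Y in HM. rewrite EM in HM.
    apply Rmax_lt_inv in HM as [M1 M2]. apply abs_lt in M1. apply abs_lt in M2.
    assert (HW := HN w). assert (Hsw : sup w < 1/8) by exact Hs.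
    unfold sup in HW. apply Rmax_le_inv in HW as [W1 W2].
    apply abs_le in W1. apply abs_le in W2.
    assert (Hsw0 : 0 <= sup w) by (unfold sup; eapply Rle_trans; [apply Rabs_pos|apply Rmax_l]).
    unfold sup in Hsw, Hsw0.
    assert (Z1 : (l1 - a1 + b1 - m1 = 0)%Z).
    { apply int_small. zR. lra. }
    assert (Z2 : (l2 - a2 + b2 - m2 = 0)%Z).
    { apply int_small. zR. lra. }
    assert (Em1 : IZR m1 = IZR l1 - IZR a1 + IZR b1).
    { assert (m1 = l1 - a1 + b1)%Z by lia. subst m1. zR. ring. }
    assert (Em2 : IZR m2 = IZR l2 - IZR a2 + IZR b2).
    { assert (m2 = l2 - a2 + b2)%Z by lia. subst m2. zR. ring. }
    split.
    + unfold sup. apply Rmax_lt; apply abs_lt; lra.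
    + exists m1, m2. split; lra.
Qed.
Lemma bernoulli lam0 (m : nat) : 1 < lam0 -> 1 + INR m * (lam0 - 1) <= lam0 ^ m.
Proof.
  intro H. induction m.
  - simpl. lra.
  - rewrite S_INR. simpl.
    assert (0 <= INR m) by apply pos_INR.
    assert (lam0 * (1 + INR m * (lam0 - 1)) <= lam0 * lam0 ^ m) by (apply Rmult_le_compat_l; lra).
    assert (0 <= INR m * ((lam0 - 1) * (lam0 - 1))) by (apply Rmult_le_pos; nra).
    nra.
Qed.

Lemma growth lam0 c M : 1 < lam0 -> (forall m, lam0 ^ m * Rabs c <= M) -> c = 0.
Proof.
  intros Hl H. destruct (Req_dec c 0) as [|Hc]; auto. exfalso.
  assert (Ha : 0 < Rabs c) by (apply Rabs_pos_lt; auto).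
  destruct (INR_unbounded (M / (Rabs c * (lam0 - 1)))) as [m Hm].
  assert (H1 := H m). assert (H2 := bernoulli lam0 m Hl).
  assert (Hp : 0 < Rabs c * (lam0 - 1)) by nra.
  apply Rgt_lt in Hm.
  assert (M < INR m * (Rabs c * (lam0 - 1))).
  { apply (Rmult_lt_compat_r (Rabs c * (lam0 - 1))) in Hm; auto.
    unfold Rdiv in Hm. rewrite Rmult_assoc, Rinv_l in Hm by lra. lra. }
  assert (0 <= INR m) by apply pos_INR.
  nra.
Qed.

Lemma HF_cat z : exists a1 a2 : Z, fst (pt (cat z)) = fst (catA (pt z)) - IZR a1 /\
                                    snd (pt (cat z)) = snd (catA (pt z)) - IZR a2.
Proof. apply pt_proj. Qed.
Lemma HF_cat_inv z : exists a1 a2 : Z, fst (pt (cat_inv z)) = fst (catAinv (pt z)) - IZR a1 /\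
                                    snd (pt (cat_inv z)) = snd (catAinv (pt z)) - IZR a2.
Proof. apply pt_proj. Qed.

Lemma HFA_cat p q (k1 k2 : Z) : exists l1 l2 : Z,
      fst (catA p) - fst (catA q) - IZR l1 = fst (catA (fst p - fst q - IZR k1, snd p - snd q - IZR k2)) /\
      snd (catA p) - snd (catA q) - IZR l2 = snd (catA (fst p - fst q - IZR k1, snd p - snd q - IZR k2)).
Proof. exists (2*k1+k2)%Z, (k1+k2)%Z. unfold catA; cbn [fst snd]. zR. split; ring. Qed.
Lemma HFA_cat_inv p q (k1 k2 : Z) : exists l1 l2 : Z,
      fst (catAinv p) - fst (catAinv q) - IZR l1 = fst (catAinv (fst p - fst q - IZR k1, snd p - snd q - IZR k2)) /\
      snd (catAinv p) - snd (catAinv q) - IZR l2 = snd (catAinv (fst p - fst q - IZR k1, snd p - snd q - IZR k2)).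
Proof. exists (k1-k2)%Z, (-k1+2*k2)%Z. unfold catAinv; cbn [fst snd]. zR. split; ring. Qed.

Lemma sup_bounds v : -(sup v) <= fst v <= sup v /\ -(sup v) <= snd v <= sup v.
Proof.
  unfold sup. split; apply abs_le; [apply Rmax_l | apply Rmax_r].
Qed.

Lemma HN_cat v : sup (catA v) <= 3 * sup v.
Proof.
  destruct (sup_bounds v) as [H1 H2]. unfold sup at 1, catA; cbn [fst snd].
  apply Rmax_lub; apply abs_le; lra.
Qed.
Lemma HN_cat_inv v : sup (catAinv v) <= 3 * sup v.
Proof.
  destruct (sup_bounds v) as [H1 H2]. unfold sup at 1, catAinv; cbn [fst snd].
  apply Rmax_lub; apply abs_le; lra.
Qed.

Definition s5 := sqrt 5.
Lemma s5_facts : s5 * s5 = 5 /\ 2 < s5 < 3.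
Proof.
  unfold s5. assert (H := sqrt_sqrt 5 ltac:(lra)). assert (H0 := sqrt_pos 5).
  split; auto. split; nra.
Qed.
Definition lam := (3 + s5) / 2.
Definition Lf1 (v : R * R) := fst v + (lam - 2) * snd v.
Definition Lf2 (v : R * R) := fst v + ((3 - s5)/2 - 2) * snd v.

Lemma Lf1_cat v : Lf1 (catA v) = lam * Lf1 v.
Proof. destruct s5_facts as [H _]. unfold Lf1, lam, catA; destruct v as [a b]; cbn [fst snd].
  assert (s5*s5*b = 5*b) by (rewrite H; ring). lra. Qed.
Lemma Lf2_cat_inv v : Lf2 (catAinv v) = lam * Lf2 v.
Proof. destruct s5_facts as [H _]. unfold Lf2, lam, catAinv; destruct v as [a b]; cbn [fst snd].
  assert (s5*s5*b = 5*b) by (rewrite H; ring). lra. Qed.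

Lemma Lf_zero v : (forall m, sup (Nat.iter m catA v) < 1/8) ->
  (forall m, sup (Nat.iter m catAinv v) < 1/8) -> v = (0, 0).
Proof.
  intros H1 H2. destruct s5_facts as [E [S1 S2]].
  assert (Hl : 1 < lam) by (unfold lam; lra).
  assert (Z1 : Lf1 v = 0).
  { apply (growth lam _ 3 Hl). intro m.
    assert (Hm : Lf1 (Nat.iter m catA v) = lam ^ m * Lf1 v).
    { induction m; simpl; [ring|]. rewrite Lf1_cat, IHm. ring. }
    assert (0 < lam ^ m) by (apply pow_lt; lra).
    rewrite <- (Rabs_pos_eq (lam ^ m)) by lra. rewrite <- Rabs_mult, <- Hm.
    destruct (sup_bounds (Nat.iter m catA v)) as [B1 B2]. assert (Hq := H1 m).
    unfold Lf1, lam in *. apply abs_le. nra. }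
  assert (Z2 : Lf2 v = 0).
  { apply (growth lam _ 3 Hl). intro m.
    assert (Hm : Lf2 (Nat.iter m catAinv v) = lam ^ m * Lf2 v).
    { induction m; simpl; [ring|]. rewrite Lf2_cat_inv, IHm. ring. }
    assert (0 < lam ^ m) by (apply pow_lt; lra).
    rewrite <- (Rabs_pos_eq (lam ^ m)) by lra. rewrite <- Rabs_mult, <- Hm.
    destruct (sup_bounds (Nat.iter m catAinv v)) as [B1 B2]. assert (Hq := H2 m).
    unfold Lf2, lam in *. apply abs_le. nra. }
  unfold Lf1, Lf2, lam in *. destruct v as [a b]; cbn [fst snd] in *.
  assert (b = 0) by nra. subst b. f_equal; lra.
Qed.

Lemma exp_main x y :
  (forall m, dT (Nat.iter m cat x) (Nat.iter m cat y) < 1/8) ->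
  (forall m, dT (Nat.iter m cat_inv x) (Nat.iter m cat_inv y) < 1/8) -> x = y.
Proof.
  intros H1 H2.
  destruct (dT_attain x y) as [k1 [k2 E]].
  set (v0 := (fst (pt x) - fst (pt y) - IZR k1, snd (pt x) - snd (pt y) - IZR k2)).
  assert (Hv0 : sup v0 < 1/8) by (unfold sup, v0; cbn [fst snd]; rewrite <- E; exact (H1 O)).
  assert (T1 := track_lin cat catA HF_cat HFA_cat HN_cat x y v0 k1 k2 eq_refl eq_refl Hv0 H1).
  assert (T2 := track_lin cat_inv catAinv HF_cat_inv HFA_cat_inv HN_cat_inv x y v0 k1 k2 eq_refl eq_refl Hv0 H2).
  assert (Hz : v0 = (0,0)).
  { apply Lf_zero; intro m; [apply (T1 m) | apply (T2 m)]. }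
  unfold v0 in Hz. injection Hz as Z1 Z2.
  apply eq_mod; [exists k1 | exists k2]; lra.
Qed.
Lemma red_mod x0 N : (0 < N)%nat -> Nat.iter N cat x0 = x0 ->
  forall t, exists k, (k < N)%nat /\ Nat.iter t cat x0 = Nat.iter k cat x0.
Proof.
  intros HN HP t. induction t as [t IH] using lt_wf_ind.
  destruct (Nat.lt_ge_cases t N) as [H|H].
  - exists t; auto.
  - destruct (IH (t - N)%nat ltac:(lia)) as [k [Hk E]].
    exists k. split; auto. rewrite <- E.
    replace (Nat.iter t cat x0) with (Nat.iter ((t - N) + N) cat x0) by (f_equal; lia). rewrite Nat.iter_add, HP. reflexivity.
Qed.

Lemma inv_orb x0 N : (0 < N)%nat -> Nat.iter N cat x0 = x0 ->
  forall m, exists t, Nat.iter m cat_inv x0 = Nat.iter t cat x0.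
Proof.
  intros HN HP m. induction m as [|m [t IH]].
  - exists O. reflexivity.
  - simpl. rewrite IH. destruct t as [|t].
    + exists (N - 1)%nat. simpl. rewrite <- HP at 1.
      replace (Nat.iter N cat x0) with (Nat.iter (S (N - 1)) cat x0) by (f_equal; lia). simpl. apply cat_inv_cat.
    + exists t. simpl. apply cat_inv_cat.
Qed.

Lemma orbit_fin x0 N : (0 < N)%nat -> Nat.iter N cat x0 = x0 ->
  forall y, orbit x0 y -> exists k, (k < N)%nat /\ y = Nat.iter k cat x0.
Proof.
  intros HN HP y [n ->]. rewrite cat_iter_form.
  destruct (0 <=? n)%Z.
  - apply red_mod; auto.
  - destruct (inv_orb x0 N HN HP (Z.to_nat (- n))) as [t ->]. apply red_mod; auto.
Qed.

Lemma dT_pos x y : x <> y -> 0 < dT x y.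
Proof.
  intro H. destruct (Rle_lt_or_eq_dec 0 (dT x y) (dT_nonneg x y)) as [|E]; auto.
  exfalso. apply H, dT_zero. auto.
Qed.

Lemma sep_one a (l : list T2) : exists s, 0 < s /\ forall q, In q l -> a <> q -> s <= dT a q.
Proof.
  induction l as [|b l [s [Hs IH]]].
  - exists 1. split; [lra|]. intros q [].
  - destruct (classic (a = b)) as [->|Hab].
    + exists s. split; auto. intros q [<-|Hq] Hne; [congruence|auto].
    + exists (Rmin s (dT a b)). split; [apply Rmin_glb_lt; auto; apply dT_pos; auto|].
      intros q [<-|Hq] Hne.
      * apply Rmin_r.
      * eapply Rle_trans; [apply Rmin_l| auto].
Qed.

Lemma sep_list (l : list T2) : exists s, 0 < s /\
  forall p q, In p l -> In q l -> p <> q -> s <= dT p q.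
Proof.
  induction l as [|a l [s [Hs IH]]].
  - exists 1. split; [lra|]. intros p q [].
  - destruct (sep_one a l) as [s' [Hs' H']].
    exists (Rmin s s'). split; [apply Rmin_glb_lt; auto|].
    intros p q [<-|Hp] [<-|Hq] Hne.
    + congruence.
    + eapply Rle_trans; [apply Rmin_r|auto].
    + rewrite dT_sym. eapply Rle_trans; [apply Rmin_r|]. apply H'; auto.
    + eapply Rle_trans; [apply Rmin_l|auto].
Qed.

Lemma sep_orbit x0 N : (0 < N)%nat -> Nat.iter N cat x0 = x0 ->
  exists s, 0 < s /\ forall p q, orbit x0 p -> orbit x0 q -> dT p q < s -> p = q.
Proof.
  intros HN HP.
  destruct (sep_list (map (fun k => Nat.iter k cat x0) (seq 0 N))) as [s [Hs H]].
  exists s. split; auto. intros p q Hp Hq Hd.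
  destruct (classic (p = q)) as [|Hne]; auto. exfalso.
  assert (Inl : forall y, orbit x0 y -> In y (map (fun k => Nat.iter k cat x0) (seq 0 N))).
  { intros y Hy. destruct (orbit_fin x0 N HN HP y Hy) as [k [Hk ->]].
    apply (in_map (fun k => Nat.iter k cat x0)). apply in_seq. lia. }
  assert (s <= dT p q) by (apply H; auto). lra.
Qed.

Lemma orbit_iter x0 y n : orbit x0 y -> orbit x0 (cat_iter n y).
Proof. intros [m ->]. exists (m + n)%Z. rewrite cat_iter_add. reflexivity. Qed.
Lemma orbit_iter_inv x0 y n : orbit x0 (cat_iter n y) -> orbit x0 y.
Proof. intro H. rewrite <- (cat_iter_inv n y). apply orbit_iter; auto. Qed.
Lemma orbit_cat x0 y : orbit x0 y -> orbit x0 (cat y).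
Proof. intro H. replace (cat y) with (cat_iter 1 y) by reflexivity. apply orbit_iter; auto. Qed.
Lemma orbit_cat_inv x0 y : orbit x0 y -> orbit x0 (cat_inv y).
Proof. intro H. replace (cat_inv y) with (cat_iter (-1) y) by reflexivity. apply orbit_iter; auto. Qed.
Definition Ud (K : T2 -> Prop) (d : R) (y : T2) : Prop := exists k, K k /\ dT y k < d.

Lemma track1 (K : T2 -> Prop) sep d (F : T2 -> T2)
  (HKsep : forall p q, K p -> K q -> dT p q < sep -> p = q)
  (Hd : 4 * d <= sep)
  (HFK : forall p, K p -> K (F p)) (HL : forall a b, dT (F a) (F b) <= 3 * dT a b)
  z k : K k -> dT z k < d -> Ud K d (F z) -> dT (F z) (F k) < d.
Proof.
  intros Hk Hz [k' [Hk' H']].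
  assert (HFk := HL z k).
  assert (k' = F k).
  { apply HKsep; auto. rewrite dT_sym in H'.
    assert (T := dT_tri k' (F z) (F k)). lra. }
  subst k'. exact H'.
Qed.

Lemma track_seq (K : T2 -> Prop) sep d (F : T2 -> T2)
  (HKsep : forall p q, K p -> K q -> dT p q < sep -> p = q)
  (Hd : 4 * d <= sep)
  (HFK : forall p, K p -> K (F p)) (HL : forall a b, dT (F a) (F b) <= 3 * dT a b)
  z k : K k -> dT z k < d -> (forall m, Ud K d (Nat.iter m F z)) ->
  forall m, dT (Nat.iter m F z) (Nat.iter m F k) < d /\ K (Nat.iter m F k).
Proof.
  intros Hk Hz HU m. induction m as [|m [IH1 IH2]].
  - simpl; auto.
  - simpl. split; [|apply HFK; auto].
    apply (track1 K sep d F HKsep Hd HFK HL); auto. apply (HU (S m)).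
Qed.

Lemma isol (K : T2 -> Prop) sep d
  (HKsep : forall p q, K p -> K q -> dT p q < sep -> p = q)
  (Hd : 4 * d <= sep) (Hd8 : d < 1/8)
  (HKc : forall p, K p -> K (cat p)) (HKi : forall p, K p -> K (cat_inv p)) z :
  (forall m, Ud K d (Nat.iter m cat z)) -> (forall m, Ud K d (Nat.iter m cat_inv z)) -> K z.
Proof.
  intros H1 H2. destruct (H1 O) as [k [Hk Hz]]. simpl in Hz.
  assert (T1 := track_seq K sep d cat HKsep Hd HKc dT_cat z k Hk Hz H1).
  assert (T2 := track_seq K sep d cat_inv HKsep Hd HKi dT_cat_inv z k Hk Hz H2).
  assert (z = k); [|subst; auto].
  apply exp_main; intro m; [destruct (T1 m) | destruct (T2 m)]; lra.
Qed.

Lemma exists_min (P : nat -> Prop) : (exists j, P j) -> exists j, P j /\ forall i, (i < j)%nat -> ~ P i.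
Proof.
  intros [j Hj]. induction j as [j IH] using lt_wf_ind.
  destruct (classic (exists i, (i < j)%nat /\ P i)) as [[i [Hi Pi]]|Hn].
  - apply (IH i Hi Pi).
  - exists j. split; auto. intros i Hi Pi. apply Hn. eauto.
Qed.

Lemma pair_track (K : T2 -> Prop) sep d (F G : T2 -> T2)
  (HKsep : forall p q, K p -> K q -> dT p q < sep -> p = q)
  (Hd : 5 * d < sep) (Hd0 : 0 < d)
  (HFK : forall p, K p -> K (F p))
  (HGF : forall z, G (F z) = z)
  (HLF : forall a b, dT (F a) (F b) <= 3 * dT a b)
  (HLG : forall a b, dT (G a) (G b) <= 3 * dT a b)
  (g h : nat -> T2) (Hg : forall i, g (S i) = F (g i)) (Hh : forall i, h (S i) = F (h i))
  (Hout : forall i, ~ Ud K d (g i) \/ ~ Ud K d (h i) -> dT (g i) (h i) < d)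
  (Hex : exists j, ~ Ud K d (g j) \/ ~ Ud K d (h j)) :
  Ud K d (g O) -> Ud K d (h O) -> dT (g O) (h O) < 2 * d.
Proof.
  intros U0 V0.
  destruct (exists_min _ Hex) as [j [Hj Hmin]].
  assert (HU : forall i, (i < j)%nat -> Ud K d (g i) /\ Ud K d (h i)).
  { intros i Hi. assert (Hn := Hmin i Hi).
    split; apply NNPP; intro; apply Hn; auto. }
  destruct j as [|j'].
  { exfalso. destruct Hj; auto. }
  assert (Claim : forall i, (i <= j')%nat ->
    exists k, K k /\ dT (g (j' - i)%nat) k < d /\ dT (h (j' - i)%nat) k < d).
  { induction i as [|i IH]; intro Hi.
    - rewrite Nat.sub_0_r.
      destruct (HU j' ltac:(lia)) as [[kx [Kx Dx]] [ky [Ky Dy]]].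
      assert (Ho := Hout (S j') Hj). rewrite Hg, Hh in Ho.
      assert (Hb := HLG (F (g j')) (F (h j'))). rewrite !HGF in Hb.
      assert (kx = ky).
      { apply HKsep; auto.
        assert (T1 := dT_tri kx (g j') ky). assert (T2 := dT_tri (g j') (h j') ky).
        rewrite dT_sym in Dx. lra. }
      subst ky. exists kx; auto.
    - destruct (IH ltac:(lia)) as [k [Kk [Dx Dy]]].
      set (t := (j' - S i)%nat) in *.
      replace (j' - i)%nat with (S t) in Dx, Dy by (unfold t; lia).
      rewrite Hg in Dx. rewrite Hh in Dy.
      destruct (HU t ltac:(unfold t; lia)) as [[kx [Kx Ex]] [ky [Ky Ey]]].
      assert (Ax : F kx = k).
      { apply HKsep; auto. assert (L := HLF (g t) kx).
        assert (T := dT_tri (F kx) (F (g t)) k). rewrite (dT_sym (F kx) (F (g t))) in T. lra. }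
      assert (Ay : F ky = k).
      { apply HKsep; auto. assert (L := HLF (h t) ky).
        assert (T := dT_tri (F ky) (F (h t)) k). rewrite (dT_sym (F ky) (F (h t))) in T. lra. }
      assert (kx = ky) by (rewrite <- (HGF kx), <- (HGF ky), Ax, Ay; reflexivity).
      subst ky. exists kx; auto. }
  destruct (Claim j' (le_n _)) as [k [Kk [Dx Dy]]].
  rewrite Nat.sub_diag in Dx, Dy.
  assert (T := dT_tri (g O) k (h O)). rewrite (dT_sym k) in T. lra.
Qed.
Lemma open_ball (c : T2) r : openT2 (fun y => dT y c < r).
Proof.
  intros p Hp. exists (r - dT (proj p) c). split; [lra|].
  intros q H1 H2. assert (T := dT_tri (proj q) (proj p) c).
  assert (P := dT_proj q p). assert (Rmax (Rabs (fst q - fst p)) (Rabs (snd q - snd p)) < r - dT (proj p) c)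
    by (apply Rmax_lt; auto). lra.
Qed.

Lemma open_Ud K d : openT2 (Ud K d).
Proof.
  intros p [k [Hk Hp]].
  destruct (open_ball k d p Hp) as [e [He H]]. exists e; split; auto.
  intros q H1 H2. exists k; split; [exact Hk | apply H; auto].
Qed.

Lemma part1 x0 sep d
  (HKsep : forall p q, orbit x0 p -> orbit x0 q -> dT p q < sep -> p = q)
  (Hd : 4 * d <= sep) (Hd8 : d < 1/8) (Hd0 : 0 < d) : dyn_isolated (orbit x0).
Proof.
  exists (Ud (orbit x0) d). split; [apply open_Ud|]. split.
  - intros y Hy. exists y. rewrite dT_refl. auto.
  - intro y. split.
    + intro H.
      assert (HU : forall n, Ud (orbit x0) d (cat_iter n y)).
      { intro n. destruct (H (- n)%Z) as [z [Hz ->]]. rewrite cat_iter_inv'. auto. }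
      apply (isol (orbit x0) sep d HKsep Hd Hd8 (orbit_cat x0) (orbit_cat_inv x0)).
      * intro m. rewrite <- cat_iter_nat. apply HU.
      * intro m. rewrite <- cat_iter_negnat. apply HU.
    + intros Hy n. exists (cat_iter (- n) y). split.
      * exists (cat_iter (- n) y). split; [apply orbit_iter; auto | rewrite dT_refl; auto].
      * rewrite cat_iter_inv'. reflexivity.
Qed.
From Coquelicot Require Compactness.

Lemma comp_a (X : T2 -> Prop) rho (HC : compatible_metric X rho) a (Xa : X a) e (He : 0 < e) :
  exists r, 0 < r /\ forall b, X b -> rho a b < r -> dT a b < e.
Proof.
  destruct HC as [HM Hiff].
  assert (Hs := proj1 (Hiff (fun b => X b /\ dT b a < e) (fun x H => proj1 H))).
  destruct Hs with (x := a) as [r [Hr Hb]].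
  - exists (fun y => dT y a < e). split; [apply open_ball|]. intros x Hx; tauto.
  - split; auto. rewrite dT_refl. auto.
  - exists r. split; auto. intros b Xb Hab. rewrite dT_sym. apply (Hb b Xb Hab).
Qed.

Lemma comp_b (X : T2 -> Prop) rho (HC : compatible_metric X rho) a (Xa : X a) r (Hr : 0 < r) :
  exists s, 0 < s /\ forall b, X b -> dT a b < s -> rho a b < r.
Proof.
  destruct HC as [[Hpos [Hz [Hsym Htri]]] Hiff].
  assert (Hs := proj2 (Hiff (fun b => X b /\ rho a b < r) (fun x H => proj1 H))).
  destruct Hs as [U [HU HXU]].
  - intros x [Xx Hx]. exists (r - rho a x). split; [lra|].
    intros y Xy Hy. split; auto. assert (T := Htri a x y Xa Xx Xy). lra.
  - assert (Ua : U a).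
    { apply HXU; auto. split; auto. replace (rho a a) with 0; [lra|].
      symmetry. apply (Hz a a Xa Xa). reflexivity. }
    rewrite <- (proj_pt a) in Ua.
    destruct (HU _ Ua) as [s [Hs Hq]].
    exists s. split; auto. intros b Xb Hab.
    destruct (dT_attain b a) as [k1 [k2 E]]. rewrite dT_sym, E in Hab.
    apply Rmax_lt_inv in Hab as [A1 A2].
    set (q := (fst (pt b) - IZR k1, snd (pt b) - IZR k2)).
    assert (Eq : proj q = b).
    { destruct (pt_proj q) as [j1 [j2 [P1 P2]]].
      apply eq_mod; [exists (- k1 - j1)%Z | exists (- k2 - j2)%Z];
        rewrite ?P1, ?P2; unfold q; cbn [fst snd]; zR; ring. }
    assert (Uq : U (proj q)).
    { apply Hq; unfold q; cbn [fst snd].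
      - replace (fst (pt b) - IZR k1 - fst (pt a)) with (fst (pt b) - fst (pt a) - IZR k1) by ring. auto.
      - replace (snd (pt b) - IZR k2 - snd (pt a)) with (snd (pt b) - snd (pt a) - IZR k2) by ring. auto. }
    rewrite Eq in Uq. apply HXU in Uq; auto. tauto.
Qed.
Lemma leb (K : T2 -> Prop) d eta (Hd : 0 < d) (Heta : 0 < eta) rho
  (HC : compatible_metric (fun y => ~ K y) rho) :
  exists c, 0 < c /\ forall a b, ~ K a -> ~ Ud K d a -> ~ K b -> rho a b < c -> dT a b < eta.
Proof.
  set (X := fun y => ~ K y) in *.
  assert (HM := proj1 HC). destruct HM as [Hpos [Hz [Hsym Htri]]].
  set (Good := fun (t : R * R) (de : R) => forall q b,
      Rabs (fst q - fst t) < de -> Rabs (snd q - snd t) < de -> X (proj q) -> ~ Ud K d (proj q) ->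
      X b -> rho (proj q) b < de -> dT (proj q) b < eta).
  assert (exG : forall t, exists de, 0 < de /\ Good t de).
  { intro t. destruct (classic (K (proj t))) as [Kt|Xt].
    - exists d. split; auto. intros q b H1 H2 Xq NU. exfalso. apply NU.
      exists (proj t). split; auto.
      eapply Rle_lt_trans; [apply dT_proj|]. apply Rmax_lt; auto.
    - destruct (comp_a X rho HC (proj t) Xt (eta/2) ltac:(lra)) as [r [Hr Ha]].
      destruct (comp_b X rho HC (proj t) Xt (r/2) ltac:(lra)) as [s [Hs Hb]].
      exists (Rmin s (Rmin (r/2) (eta/2))).
      assert (M1 := Rmin_l s (Rmin (r/2) (eta/2))).
      assert (M2 := Rmin_r s (Rmin (r/2) (eta/2))).
      assert (M3 := Rmin_l (r/2) (eta/2)). assert (M4 := Rmin_r (r/2) (eta/2)).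
      split. { repeat apply Rmin_glb_lt; lra. }
      intros q b H1 H2 Xq NU Xb Hqb.
      assert (Dtq : dT (proj t) (proj q) < Rmin s (Rmin (r/2) (eta/2))).
      { eapply Rle_lt_trans; [apply dT_proj|]. apply Rmax_lt; rewrite Rabs_minus_sym; auto. }
      assert (R1 : rho (proj t) (proj q) < r/2) by (apply Hb; auto; lra).
      assert (R2 : rho (proj t) b < r) by (assert (T := Htri _ _ _ Xt Xq Xb); lra).
      assert (D1 : dT (proj t) b < eta/2) by (apply Ha; auto).
      assert (T := dT_tri (proj q) (proj t) b). rewrite (dT_sym (proj q) (proj t)) in T. lra. }
  assert (Hdel : forall u v, {de : RIneq.posreal | Good (u, v) de}).
  { intros u v. apply constructive_indefinite_description.
    destruct (exG (u, v)) as [de [Hde G]]. exists (RIneq.mkposreal de Hde). exact G. }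
  destruct (Compactness.compactness_value_2d 0 1 0 1 (fun u v => proj1_sig (Hdel u v))) as [c Hc].
  exists (RIneq.pos c). split; [apply RIneq.cond_pos|].
  intros a b Xa NUa Xb Hab.
  destruct (pt_bounds a) as [B1 B2].
  assert (Hc' := Hc (fst (pt a)) (snd (pt a)) ltac:(lra) ltac:(lra)).
  apply NNPP. intro Hn. apply Hc'. intros [u [v [_ [_ [Hu [Hv Hcv]]]]]].
  apply Hn. destruct (Hdel u v) as [de G]. cbn in Hu, Hv, Hcv.
  assert (G' := G (pt a) b Hu Hv). rewrite proj_pt in G'. apply G'; auto. lra.
Qed.
Theorem mainTheorem15 (x0 : T2) :
  periodic_point x0 ->
  dyn_isolated (orbit x0) /\
  mi_expansive_on (fun y => ~ orbit x0 y).
Proof.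
  intros [N [HN HP]].
  destruct (sep_orbit x0 N HN HP) as [sep [Hsep HKsep]].
  set (d := Rmin (sep / 6) (1 / 32)).
  assert (Ds1 := Rmin_l (sep / 6) (1 / 32)). assert (Ds2 := Rmin_r (sep / 6) (1 / 32)).
  fold d in Ds1, Ds2.
  assert (Hd0 : 0 < d) by (unfold d; apply Rmin_glb_lt; lra).
  split.
  { apply (part1 x0 sep d); auto; lra. }
  intros rho HC.
  assert (Hsym := proj1 (proj2 (proj2 (proj1 HC)))).
  destruct (leb (orbit x0) d d Hd0 Hd0 rho HC) as [c [Hc HL]].
  exists (c / 2). split; [lra|].
  intros x y Xx Xy Hne.
  apply NNPP; intro Hno. apply Hne.
  assert (XI : forall n z, ~ orbit x0 z -> ~ orbit x0 (cat_iter n z)).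
  { intros n z Hz Hc'. apply Hz. eapply orbit_iter_inv; eauto. }
  assert (Hr : forall n, rho (cat_iter n x) (cat_iter n y) < c).
  { intro n. assert (~ rho (cat_iter n x) (cat_iter n y) > c / 2) by (intro; apply Hno; eauto).
    lra. }
  assert (Hout : forall n, ~ Ud (orbit x0) d (cat_iter n x) \/ ~ Ud (orbit x0) d (cat_iter n y) ->
    dT (cat_iter n x) (cat_iter n y) < d).
  { intros n [H|H].
    - apply HL; auto.
    - rewrite dT_sym. apply HL; auto. rewrite Hsym; auto. }
  assert (Hall : forall n, dT (cat_iter n x) (cat_iter n y) < 1 / 8).
  { intro n.
    destruct (classic (Ud (orbit x0) d (cat_iter n x) /\ Ud (orbit x0) d (cat_iter n y)))
      as [[U1 U2]|Hn].
    2: { assert (dT (cat_iter n x) (cat_iter n y) < d); [|lra].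
         apply Hout. apply not_and_or in Hn. auto. }
    assert (Xz : ~ orbit x0 (cat_iter n x)) by (apply XI; auto).
    destruct (classic (forall m, Ud (orbit x0) d (Nat.iter m cat (cat_iter n x)))) as [Hf|Hf].
    - destruct (classic (forall m, Ud (orbit x0) d (Nat.iter m cat_inv (cat_iter n x)))) as [Hb|Hb].
      + exfalso. apply Xz.
        apply (isol (orbit x0) sep d HKsep ltac:(lra) ltac:(lra) (orbit_cat x0) (orbit_cat_inv x0) _ Hf Hb).
      + apply not_all_ex_not in Hb as [m Hm].
        assert (dT (cat_iter n x) (cat_iter n y) < 2 * d); [|lra].
        apply (pair_track (orbit x0) sep d cat_inv cat HKsep ltac:(lra) Hd0 (orbit_cat_inv x0)
          cat_cat_inv dT_cat_inv dT_cat
          (fun i => Nat.iter i cat_inv (cat_iter n x)) (fun i => Nat.iter i cat_inv (cat_iter n y)));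
          auto.
        * intros i Hi. cbn beta in *. rewrite !iter_catinv_add in *. apply Hout; auto.
        * exists m. left. auto.
    - apply not_all_ex_not in Hf as [m Hm].
      assert (dT (cat_iter n x) (cat_iter n y) < 2 * d); [|lra].
      apply (pair_track (orbit x0) sep d cat cat_inv HKsep ltac:(lra) Hd0 (orbit_cat x0)
        cat_inv_cat dT_cat dT_cat_inv
        (fun i => Nat.iter i cat (cat_iter n x)) (fun i => Nat.iter i cat (cat_iter n y)));
        auto.
      * intros i Hi. cbn beta in *. rewrite !iter_cat_add in *. apply Hout; auto.
      * exists m. left. auto. }
  apply exp_main; intro m.
  - rewrite <- !cat_iter_nat. apply Hall.
  - rewrite <- !cat_iter_negnat. apply Hall.
Qed.
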